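(* Consider the affine discrete-time system $$x_{k+1}=Ax_k+Bu_k+e,\qquad y_k=Cx_k+Du_k+r,$$ with state $x_k\in\mathbb{R}^n$, input $u_k\in\mathbb{R}^m$, output $y_k\in\mathbb{R}^p$, matrices $A,B,C,D$ of compatible dimensions and constant vectors $e\in\mathbb{R}^n$, $r\in\mathbb{R}^p$. Let $\{u_k^{d},x_k^{d},y_k^{d}\}_{k=0}^{N-1}$ be an input-state-output trajectory of this system, and let $L\in\mathbb{N}$ with $L\le N$. Suppose the data $\{u_k^d\}_{k=0}^{N-1}$, $\{x_k^d\}_{k=0}^{N-L}$ are persistently exciting of order $L$, i.e. $$\operatorname{rank}\begin{bmatrix}H_L(u^d)\\ H_1(x^d_{[0,N-L]})\\ \mathbb{1}_{N-L+1}^\top\end{bmatrix}=mL+n+1 .$$ Then a sequence $\{u_k,y_k\}_{k=0}^{L-1}$ is an input-output trajectory of the system (for some initial state) if and only if there exists $\alpha\in\mathbb{R}^{N-L+1}$ such that $$\sum_{i=0}^{N-L}\alpha_i=1,\qquad \begin{bmatrix}H_L(u^d)\\ H_L(y^d)\end{bmatrix}\alpha=\begin{bmatrix}u\\ y\end{bmatrix},$$ where $u=(u_0^\top,\dots,u_{L-1}^\top)^\top$ and $y=(y_0^\top,\dots,y_{L-1}^\top)^\top$.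
   Context: For a sequence $\{z_k\}_{k=0}^{N-1}$, the Hankel matrix of depth $L$ is $$H_L(z)=\begin{bmatrix}z_0&z_1&\cdots&z_{N-L}\\ z_1&z_2&\cdots&z_{N-L+1}\\ \vdots&\vdots&\ddots&\vdots\\ z_{L-1}&z_L&\cdots&z_{N-1}\end{bmatrix},$$ and $z_{[a,b]}$ denotes the stacked window $(z_a^\top,\dots,z_b^\top)^\top$ (so $H_1(x^d_{[0,N-L]})=[x_0^d\ \cdots\ x_{N-L}^d]$). $\mathbb{1}_q$ denotes the $q$-dimensional column vector of ones. The matrices $A,B,C,D$ and vectors $e,r$ are unknown to the user but fixed. *)

(* Defs.v *)
From mathcomp Require Import all_boot all_order all_algebra.
Set Implicit Arguments. Unset Strict Implicit. Unset Printing Implicit Defensive.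
Import Order.TTheory GRing.Theory Num.Theory.
Local Open Scope ring_scope.

Lemma hankel_mod_lt (L q : nat) (i : 'I_(L * q)) : (i %% q < q)%N.
Proof.
case: q i => [|q] i; first by rewrite muln0 in i *; case: i.
by rewrite ltn_mod.
Qed.

(* Column j is the stacked window
   (z_j^T, ..., z_{j+L-1}^T)^T; row index i = a*q + b refers to
   component b of z_{j+a}. *)
Definition hankel (R : Type) (q L ncol : nat) (z : nat -> 'cV[R]_q)
  : 'M[R]_(L * q, ncol) :=
  \matrix_(i < L * q, j < ncol)
     z (j + i %/ q)%N (Ordinal (hankel_mod_lt i)) 0.

Definition stack (R : Type) (q L : nat) (z : nat -> 'cV[R]_q) : 'cV[R]_(L * q) :=
  hankel L 1 z.

(* Main.v *)
Require Import Defs.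
From mathcomp Require Import all_boot all_order all_algebra.
From mathcomp Require Import zify.
Import Order.TTheory GRing.Theory Num.Theory.
Set Implicit Arguments. Unset Strict Implicit.
Local Open Scope ring_scope.

Definition W (R : pzRingType) q nc (z : nat -> 'cV[R]_q) (al : 'cV[R]_nc) a : 'cV[R]_q :=
  \sum_(j < nc) al j 0 *: z (j + a)%N.

Lemma hankel_stack (R : comPzRingType) q L nc (z w : nat -> 'cV[R]_q) (al : 'cV[R]_nc) :
  hankel L nc z *m al = stack L w <-> forall a, (a < L)%N -> W z al a = w a.
Proof.
split.
- move=> H a aL; apply/matrixP => b c; rewrite ord1.
  have q0 : (0 < q)%N by case: b => b /=; case: q {z w H} => //.
  have iL : (a * q + b < L * q)%N.
    have : (a.+1 * q <= L * q)%N by rewrite leq_mul2r aL orbT.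
    rewrite mulSn; have := ltn_ord b; lia.
  have Hd : ((a * q + b) %/ q = a)%N by rewrite divnMDl // divn_small // addn0.
  have Hm : ((a * q + b) %% q = b)%N by rewrite -modnDml modnMl add0n modn_small.
  move/matrixP: H => /(_ (Ordinal iL) 0).
  rewrite /stack /hankel !mxE /W summxE.
  have -> : Ordinal (hankel_mod_lt (Ordinal iL)) = b by apply: val_inj; rewrite /= Hm.
  rewrite /= Hd add0n => <-.
  apply: eq_bigr => j _; rewrite !mxE mulrC.
  have -> : Ordinal (hankel_mod_lt (Ordinal iL)) = b by apply: val_inj; rewrite /= Hm.
  by rewrite /= Hd.
- move=> H; apply/matrixP => i c; rewrite ord1.
  have q0 : (0 < q)%N by case: i => i /=; case: q {z w H} => //; rewrite muln0.
  have iL : (i %/ q < L)%N by rewrite ltn_divLR.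
  rewrite /stack /hankel !mxE add0n -(H _ iL) /W summxE.
  by apply: eq_bigr => j _; rewrite !mxE mulrC.
Qed.

Lemma W_affine (R : comPzRingType) s k l nc (al : 'cV[R]_nc) (P : 'M[R]_(s, k))
  (Q : 'M[R]_(s, l)) (f : nat -> 'cV[R]_k) (g : nat -> 'cV[R]_l) (c : 'cV[R]_s) :
  \sum_(j < nc) al j 0 *: (P *m f j + Q *m g j + c) =
  P *m (\sum_(j < nc) al j 0 *: f j) + Q *m (\sum_(j < nc) al j 0 *: g j)
  + (\sum_(j < nc) al j 0) *: c.
Proof.
rewrite !mulmx_sumr scaler_suml -!big_split; apply: eq_bigr => j _.
by rewrite !scalerDr -!scalemxAr.
Qed.

Theorem theorem1 (R : realFieldType) (n m p : nat)
  (A : 'M[R]_n) (B : 'M[R]_(n, m)) (C : 'M[R]_(p, n)) (D : 'M[R]_(p, m))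
  (e : 'cV[R]_n) (r : 'cV[R]_p) (N L : nat)
  (ud : nat -> 'cV[R]_m) (xd : nat -> 'cV[R]_n) (yd : nat -> 'cV[R]_p)
  (Hx : forall k, (k.+1 < N)%N -> xd k.+1 = A *m xd k + B *m ud k + e)
  (Hy : forall k, (k < N)%N -> yd k = C *m xd k + D *m ud k + r)
  (HLN : (L <= N)%N)
  (Hpe : \rank (col_mx (hankel L (N - L).+1 ud)
                 (col_mx (hankel 1 (N - L).+1 xd)
                         (const_mx 1 : 'rV[R]_((N - L).+1))))
         = (m * L + n + 1)%N) :
  forall (u : nat -> 'cV[R]_m) (y : nat -> 'cV[R]_p),
    (exists x : nat -> 'cV[R]_n,
        (forall k, (k.+1 < L)%N -> x k.+1 = A *m x k + B *m u k + e) /\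
        (forall k, (k < L)%N -> y k = C *m x k + D *m u k + r))
    <->
    (exists alpha : 'cV[R]_((N - L).+1),
        \sum_(i < (N - L).+1) alpha i 0 = 1 /\
        col_mx (hankel L (N - L).+1 ud) (hankel L (N - L).+1 yd) *m alpha
        = col_mx (stack L u) (stack L y)).
Proof.
move=> u y.
have bnd : forall (j : 'I_(N - L).+1) a, (a < L)%N -> (j + a < N)%N.
  by move=> j a aL; have := ltn_ord j; lia.
have Wx : forall al : 'cV[R]_((N - L).+1), \sum_(i < (N - L).+1) al i 0 = 1 ->
   forall a, (a.+1 < L)%N -> W xd al a.+1 = A *m W xd al a + B *m W ud al a + e.
  move=> al s1 a aL; rewrite /W.
  rewrite (eq_bigr (fun j : 'I_(N - L).+1 => al j 0 *: (A *m xd (j + a)%N + B *m ud (j + a)%N + e))).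
    by rewrite (@W_affine _ _ _ _ _ al _ _ (fun j => xd (j + a)%N) (fun j => ud (j + a)%N)) s1 scale1r.
  by move=> j _; rewrite addnS Hx // -addnS bnd.
have Wy : forall al : 'cV[R]_((N - L).+1), \sum_(i < (N - L).+1) al i 0 = 1 ->
   forall a, (a < L)%N -> W yd al a = C *m W xd al a + D *m W ud al a + r.
  move=> al s1 a aL; rewrite /W.
  rewrite (eq_bigr (fun j : 'I_(N - L).+1 => al j 0 *: (C *m xd (j + a)%N + D *m ud (j + a)%N + r))).
    by rewrite (@W_affine _ _ _ _ _ al _ _ (fun j => xd (j + a)%N) (fun j => ud (j + a)%N)) s1 scale1r.
  by move=> j _; rewrite Hy // bnd.
split.
- case=> x [Hxx Hyy].
  pose v := col_mx (stack L u) (col_mx (stack 1 (fun _ => x 0%N)) (const_mx 1 : 'cV[R]_1)).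
  set M := col_mx _ _ in Hpe.
  have full : row_full M^T by rewrite /row_full mxrank_tr Hpe; apply/eqP; lia.
  have /submxP [Dm HD] : (v^T <= M^T)%MS by apply: submx_full.
  have Hv : M *m Dm^T = v by rewrite -[v]trmxK HD trmx_mul trmxK.
  exists Dm^T.
  rewrite /M /v !mul_col_mx in Hv.
  case/eq_col_mx: Hv => Hu /eq_col_mx [H0 H1].
  have s1 : \sum_(i < (N - L).+1) Dm^T i 0 = 1.
    move/matrixP: H1 => /(_ 0 0); rewrite !mxE => <-.
    by apply: eq_bigr => j _; rewrite !mxE mul1r.
  split => //.
  rewrite mul_col_mx Hu; congr col_mx.
  have HWu := proj1 (hankel_stack _ _ _ _) Hu.
  have HW0 := proj1 (hankel_stack _ _ _ _) H0 0%N isT.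
  have HWx : forall a, (a < L)%N -> W xd Dm^T a = x a.
    elim=> [|a IH] aL; first by rewrite HW0.
    by rewrite Wx // IH ?HWu ?Hxx // ltnW.
  apply/hankel_stack => a aL.
  by rewrite Wy // HWx // HWu // Hyy.
- case=> al [s1 H].
  rewrite mul_col_mx in H; case/eq_col_mx: H => Hu Hy'.
  have HWu := proj1 (hankel_stack _ _ _ _) Hu.
  have HWy := proj1 (hankel_stack _ _ _ _) Hy'.
  exists (W xd al); split.
    by move=> k kL; rewrite Wx // HWu // ltnW.
  by move=> k kL; rewrite -HWy // Wy // HWu.
Qed.
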